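(* For every context $\Gamma$ and formula $A$: if the sequent $\Gamma\vdash A$ is derivable in the sequent calculus, then it has a focused derivation.
   Context: Formulas are built from atoms ($p,q,\dots$) by a binary product: every formula is an atom or $A\bullet B$. A context is a finite (possibly empty) list of formulas; commas denote concatenation. The sequent calculus has exactly four rules (no weakening, contraction or exchange): ($\bullet L$) from $A,B,\Delta\vdash C$ infer $A\bullet B,\Delta\vdash C$ (the product must be the leftmost formula); ($\bullet R$) from $\Gamma\vdash A$ and $\Delta\vdash B$ infer $\Gamma,\Delta\vdash A\bullet B$; ($id$) $A\vdash A$; ($cut$) from $\Theta\vdash A$ and $\Gamma,A,\Delta\vdash B$ infer $\Gamma,\Theta,\Delta\vdash B$. A sequent is derivable if it is the conclusion of a finite derivation tree of these rules with no undischarged premises. A context is irreducible if its leftmost formula is not a product (i.e. it is empty or begins with an atom), and reducible otherwise. A focused derivation is a finite derivation tree (with no undischarged premises) using only: the rule ($\bullet L$); the restricted rule ($\bullet R^{foc}$): from $\Gamma\vdash A$ and $\Delta\vdash B$ infer $\Gamma,\Delta\vdash A\bullet B$, where $\Gamma$ is irreducible; and the restricted rule ($id^{atm}$): $p\vdash p$ for atoms $p$ (no cut). *)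

(* Defs.v *)
(* Product-only fragment of the non-commutative Lambek calculus. *)
From Stdlib Require Import List.
Import ListNotations.

Inductive formula : Type :=
| Atom : nat -> formula
| Prod : formula -> formula -> formula.

Definition context := list formula.

Inductive derivable : context -> formula -> Prop :=
| d_prodL : forall A B Delta C,
    derivable (A :: B :: Delta) C ->
    derivable (Prod A B :: Delta) C
| d_prodR : forall Gamma Delta A B,
    derivable Gamma A -> derivable Delta B ->
    derivable (Gamma ++ Delta) (Prod A B)
| d_id : forall A, derivable [A] A
| d_cut : forall Theta Gamma Delta A B,
    derivable Theta A ->
    derivable (Gamma ++ A :: Delta) B ->
    derivable (Gamma ++ Theta ++ Delta) B.

Definition irreducible (Gamma : context) : Prop :=
  match Gamma with
  | [] => True
  | Atom _ :: _ => True
  | Prod _ _ :: _ => False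
  end.

Inductive focused : context -> formula -> Prop :=
| f_prodL : forall A B Delta C,
    focused (A :: B :: Delta) C ->
    focused (Prod A B :: Delta) C
| f_prodR : forall Gamma Delta A B,
    irreducible Gamma ->
    focused Gamma A -> focused Delta B ->
    focused (Gamma ++ Delta) (Prod A B)
| f_id_atm : forall p, focused [Atom p] (Atom p).

(* Main.v *)
Require Import Defs.
From Stdlib Require Import List.
Import ListNotations.

Lemma foc_nonempty : forall G A, focused G A -> G <> [].
Proof.
  intros G A H; induction H; try discriminate.
  destruct Gamma; [contradiction|discriminate].
Qed.

Lemma irr_head : forall g l1 l2, irreducible (g :: l1) -> irreducible (g :: l2).
Proof. intros g l1 l2; destruct g; simpl; auto. Qed.

Lemma prodR_adm : forall G A, focused G A -> forall D B, focused D B ->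
  focused (G ++ D) (Prod A B).
Proof.
  intros G A H; induction H; intros D0 B0 HD.
  - simpl. apply f_prodL. apply (IHfocused D0 B0 HD).
  - apply f_prodR.
    + pose proof (foc_nonempty _ _ H0) as Hn.
      destruct Gamma as [|g l]; [contradiction|]. exact (irr_head _ _ _ H).
    + apply f_prodR; auto.
    + exact HD.
  - apply f_prodR; simpl; auto using f_id_atm.
Qed.

Lemma foc_id : forall A, focused [A] A.
Proof.
  induction A.
  - apply f_id_atm.
  - apply f_prodL. apply (prodR_adm [A1] A1 IHA1 [A2] A2 IHA2).
Qed.

Lemma foc_atom : forall T p, focused T (Atom p) -> T = [Atom p].
Proof.
  intros T p H. remember (Atom p) as P. induction H; try discriminate.
  - specialize (IHfocused HeqP). discriminate.
  - congruence.
Qed.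

Lemma cut_adm : forall A T G D B, focused T A -> focused (G ++ A :: D) B ->
  focused (G ++ T ++ D) B.
Proof.
  induction A as [p | X IHX Y IHY].
  - intros T G D B HT H. apply foc_atom in HT; subst; simpl; assumption.
  - intros T G D B HT H. remember (G ++ Prod X Y :: D) as L.
    revert G D HeqL. induction H; intros G' D' HeqL.
    + destruct G' as [|f G''].
      * simpl in HeqL. injection HeqL as -> -> ->. clear IHfocused.
        assert (Hc : forall T0, focused T0 (Prod X Y) -> focused (T0 ++ D') C).
        { intros T0 H0. remember (Prod X Y) as P. induction H0; try discriminate.
          - simpl. apply f_prodL. apply IHfocused; auto.
          - injection HeqP as -> ->.
            pose proof (IHY Delta [X] D' C H0_0 H) as H1. simpl in H1.
            pose proof (IHX Gamma [] (Delta ++ D') C H0_ H1) as H2. simpl in H2.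
            rewrite <- app_assoc. exact H2. }
        simpl. apply Hc. exact HT.
      * simpl in HeqL. injection HeqL as Hf Hd; subst.
        simpl. apply f_prodL. apply (IHfocused (A :: B :: G'') D'). reflexivity.
    + apply app_eq_app in HeqL. destruct HeqL as [l [[E1 E2] | [E1 E2]]].
      * destruct l as [|f l'].
        -- simpl in E2. rewrite app_nil_r in E1. subst.
           apply f_prodR; auto.
           apply (IHfocused2 [] D'). reflexivity.
        -- simpl in E2. injection E2 as Hf Hd. subst.
           destruct G' as [|g G'']; [simpl in H; contradiction|].
           replace ((g :: G'') ++ T ++ l' ++ Delta) with (((g :: G'') ++ T ++ l') ++ Delta)
             by (rewrite <- !app_assoc; reflexivity).
           apply f_prodR.
           ++ exact (irr_head _ _ _ H).
           ++ apply IHfocused1. reflexivity.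
           ++ assumption.
      * subst. rewrite <- app_assoc. apply f_prodR; auto.
    + destruct G' as [|g [|h l]]; simpl in HeqL; discriminate.
Qed.

Theorem theorem1p12 (Gamma : context) (A : formula) :
  derivable Gamma A -> focused Gamma A.
Proof.
  intros H; induction H.
  - apply f_prodL; auto.
  - apply prodR_adm; auto.
  - apply foc_id.
  - apply cut_adm with (A := A); auto.
Qed.
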